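(* Let $T$ be a non-empty set and $U=(U(t))_{t\in T}$ a stochastic process whose marginals $U(t)$ are all uniform on $(0,1)$ (with $\inf_{t\in S}U(t)$ and $\sup_{t\in S}U(t)$ measurable for the subsets $S$ below). Suppose there exist a finite covering $T=\bigcup_{j=1}^NT_j$ and $\lambda>1$ such that for every $j=1,\ldots,N$, $$\liminf_{x\downarrow0}\mathbb{P}\Big[\sup_{t\in T_j}U(t)\le\lambda x\ \Big|\ \inf_{t\in T_j}U(t)\le x\Big]>0.$$ Then $\mathbb{P}[\inf_{t\in T}U(t)\le x]=O(x)$ as $x\downarrow0$. *)

(* Defs.v *)
From HB Require Import structures.
From mathcomp Require Import all_boot all_order all_algebra.
From mathcomp Require Import all_classical all_reals all_analysis measurable_realfun.
Set Implicit Arguments. Unset Strict Implicit. Unset Printing Implicit Defensive.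
Import Order.TTheory GRing.Theory Num.Theory.
Import numFieldNormedType.Exports.
Local Open Scope classical_set_scope.
Local Open Scope ring_scope.

Definition pinf {Omega T : Type} {R : realType} (U : T -> Omega -> R) (S : set T)
  (w : Omega) : \bar R := ereal_inf [set (U t w)%:E | t in S].
Definition psup {Omega T : Type} {R : realType} (U : T -> Omega -> R) (S : set T)
  (w : Omega) : \bar R := ereal_sup [set (U t w)%:E | t in S].

(* elementary conditional probability P[A | B] = P(A n B) / P(B)
   (with the MathComp convention r / 0 = 0) *)
Definition cond_prob {d} {Omega : measurableType d} {R : realType}
  (P : probability Omega R) (A B : set Omega) : R :=
  fine (P (A `&` B)) / fine (P B).

Definition uniform01 {d} {Omega : measurableType d} {R : realType}
  (P : probability Omega R) (X : Omega -> R) : Prop :=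
  measurable_fun setT X /\
  forall x : R, P [set w | X w <= x] = (Num.min (Num.max x 0) 1)%:E.

(* Main.v *)
Require Import Defs.
From HB Require Import structures.
From mathcomp Require Import all_boot all_order all_algebra.
From mathcomp Require Import all_classical all_reals all_analysis measurable_realfun.
Import Order.TTheory GRing.Theory Num.Theory.
Import numFieldNormedType.Exports.
Local Open Scope classical_set_scope.
Local Open Scope ring_scope.
Lemma mle d (Omega : measurableType d) (R : realType) (f : Omega -> \bar R) y :
  measurable_fun [set: Omega] f -> measurable [set w | (f w <= y)%E].
Proof. by move=> mf; rewrite -[X in measurable X]setTI; apply: emeasurable_fun_infty_c. Qed.
Lemma helper (d : measure_display) (Omega : measurableType d) (R : realType)
  (P : probability Omega R) (T : Type) (U : T -> Omega -> R) (S : set T) (lambda c y : R) :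
  (forall t, uniform01 P (U t)) -> 0 < c -> 0 < y -> 0 < lambda ->
  measurable_fun [set: Omega] (fun w : Omega => pinf U S w) ->
  measurable_fun [set: Omega] (fun w : Omega => psup U S w) ->
  c < cond_prob P [set w | (psup U S w <= (lambda * y)%:E)%E]
                       [set w | (pinf U S w <= y%:E)%E] ->
  (P [set w | (pinf U S w <= y%:E)%E] <= (lambda * y / c)%:E)%E.
Proof.
move=> hU c0 y0 l0 mi ms; rewrite /cond_prob.
set B := [set w | _]; set A := [set w | _].
have mA : measurable A by exact: mle.
have mB : measurable B by exact: mle.
have finA : P A \is a fin_num by rewrite ge0_fin_numE // (le_lt_trans (probability_le1 _ _)) ?ltry.
have finAB : P (B `&` A) \is a fin_num.
  by rewrite ge0_fin_numE // (le_lt_trans (probability_le1 _ _)) ?ltry //; apply: measurableI.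
have a0 : 0 <= fine (P A) by apply: fine_ge0.
have [aE|apos] := eqVneq (fine (P A)) 0.
  by rewrite aE invr0 mulr0 => /(lt_trans c0); rewrite ltxx.
have apos' : 0 < fine (P A) by rewrite lt0r apos.
have [w Aw] : A !=set0.
  apply/set0P/eqP => A0; move: apos; rewrite A0 measure0 /=; by rewrite eqxx.
have [t St] : S !=set0.
  apply/set0P/eqP => S0; move: Aw; rewrite /A /= /pinf S0 image_set0 ereal_inf0.
  by rewrite leye_eq.
have hB : B `&` A `<=` [set w | ((U t w)%:E <= (lambda * y)%:E)%E].
  move=> v [Bv _]; apply: (le_trans _ Bv); apply: ereal_sup_ubound; by exists t.
have mUt : measurable [set w | ((U t w)%:E <= (lambda * y)%:E)%E].
  apply: mle; apply/measurable_EFinP; exact: (hU t).1.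
have := le_measure P (mem_set (measurableI _ _ mB mA)) (mem_set mUt) hB.
have E : P [set w | ((U t w)%:E <= (lambda * y)%:E)%E] = (Num.min (Num.max (lambda * y) 0) 1)%:E.
  rewrite -(hU t).2; congr (P _); by apply/seteqP; split => v /=; rewrite lee_fin.
move=> hb0; have hb : (P (B `&` A) <= (Num.min (Num.max (lambda * y) 0) 1)%:E)%E by rewrite -E.
have hb' : fine (P (B `&` A)) <= lambda * y.
  rewrite -lee_fin fineK //; apply: (le_trans hb); rewrite lee_fin.
  rewrite ge_min; apply/orP; left; rewrite ge_max lexx /=; apply/ltW/mulr_gt0 => //.
rewrite ltr_pdivlMr // => hc.
rewrite -(fineK finA) lee_fin ler_pdivlMr // mulrC; apply: ltW; exact: lt_le_trans hc hb'.
Qed.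

From mathcomp Require Import ring.

Theorem lemma1 (d : measure_display) (Omega : measurableType d) (R : realType)
  (P : probability Omega R) (T : Type) (U : T -> Omega -> R)
  (N : nat) (Tj : 'I_N -> set T) (lambda : R) :
  [set: T] !=set0 ->
  (forall t, uniform01 P (U t)) ->
  \bigcup_(j in [set: 'I_N]) Tj j = [set: T] ->
  1 < lambda ->
  measurable_fun [set: Omega] (fun w : Omega => pinf U [set: T] w) ->
  (forall j, measurable_fun [set: Omega] (fun w : Omega => pinf U (Tj j) w)) ->
  (forall j, measurable_fun [set: Omega] (fun w : Omega => psup U (Tj j) w)) ->
  (forall j, exists c : R, 0 < c /\
     \forall x \near 0^'+,
       c < cond_prob P [set w | (psup U (Tj j) w <= (lambda * x)%:E)%E]
                       [set w | (pinf U (Tj j) w <= x%:E)%E]) ->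
  exists C : R, \forall x \near 0^'+,
    (P [set w | pinf U [set: T] w <= x%:E] <= (C * x)%:E)%E.
Proof.
move=> _ hU hcov l1 mT mi ms hc.
have l0 : 0 < lambda by apply: lt_trans l1.
have [c hc'] := choice hc.
have : \forall x \near 0^'+, forall j, c j < cond_prob P
   [set w | (psup U (Tj j) w <= (lambda * x)%:E)%E] [set w | (pinf U (Tj j) w <= x%:E)%E].
  by apply: filter_forall => j; exact: (hc' j).2.
rewrite near_withinE => /nbhs_ballP [e /= e0 He].
exists (\sum_(j < N) 2 * lambda / c j).
rewrite near_withinE; apply/nbhs_ballP; exists (e / 2) => /=; first by apply: divr_gt0.
move=> x bx x0.
have x2 : 0 < 2 * x by apply: mulr_gt0.
have hQ := He (2 * x).
have {}hQ : forall j, c j < cond_prob P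
   [set w | (psup U (Tj j) w <= (lambda * (2 * x))%:E)%E]
   [set w | (pinf U (Tj j) w <= (2 * x)%:E)%E].
  apply: hQ => //.
  move: bx; rewrite /ball /= !sub0r !normrN !gtr0_norm // => bx.
  by rewrite ltr_pdivlMr // in bx; rewrite mulrC.
pose A j := [set w | (pinf U (Tj j) w <= (2 * x)%:E)%E].
have hA j : (P (A j) <= (lambda * (2 * x) / c j)%:E)%E.
  by apply: helper => //; exact: (hc' j).1.
pose F (k : nat) := if (insub k : option 'I_N) is Some j then A j else set0.
have FA (j : 'I_N) : F j = A j by rewrite /F valK.
have mF k : `I_N k -> measurable (F k).
  by move=> _; rewrite /F; case: insub => [j|//]; apply: mle; exact: mi.
have sub : [set w | (pinf U [set: T] w <= x%:E)%E] `<=` \big[setU/set0]_(k < N) F k.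
  move=> w /= hw; rewrite -bigcup_mkord.
  have : (pinf U [set: T] w < (2 * x)%:E)%E.
    by apply: (le_lt_trans hw); rewrite lte_fin ltr_pMl // ltr1n.
  case/ereal_inf_lt => _ [t _ <-] ht.
  have : (\bigcup_(j in [set: 'I_N]) Tj j) t by rewrite hcov.
  case=> j _ tj; exists j => //=; rewrite FA /A /=.
  apply: ltW; apply: le_lt_trans ht; apply: ereal_inf_lbound; by exists t.
have := content_subadditive P mF (@mle _ _ _ _ (x%:E) mT) sub.
move/le_trans; apply.
apply: (@le_trans _ _ (\sum_(j < N) (lambda * (2 * x) / c j)%:E)%E).
  by apply: lee_sum => j _; rewrite /F valK; exact: hA.
rewrite sumEFin lee_fin mulr_suml; apply: ler_sum => j _.
rewrite le_eqVlt; apply/orP; left; apply/eqP; ring.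
Qed.
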